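(* Let $G=(V,E)$ be a simple undirected graph with $V=[n]$ and let $k\ge 1$ be an integer. Let (P1) be the problem: maximize $\sum_{r\in[k]}\sum_{i\in[n]}Y^{rr}_{ii}$ over $Y\in\mathbb S^{n(k+1)}$ (with $n\times n$ blocks $Y^{rl}$, $r,l\in[k+1]$) subject to $Y^{rr}_{ij}=0$ for $\{i,j\}\in E$, $r\in[k]$; $\sum_{r\in[k+1]}Y^{rr}_{ii}=1$ for $i\in[n]$; $Y^{rl}_{ii}=0$ for $i\in[n]$, $r,l\in[k+1]$, $r\ne l$; $Y\ge 0$; $\begin{bmatrix}1&\mathrm{diag}(Y)^{\top}\\ \mathrm{diag}(Y)&Y\end{bmatrix}\succeq0$. Let (P2) be the problem: maximize $\sum_{r\in[k]}\sum_{i\in[n]}Y^{rr}_{ii}$ over $Y\in\mathbb S^{nk}$ (with $n\times n$ blocks $Y^{rl}$, $r,l\in[k]$) subject to $Y^{rr}_{ij}=0$ for $\{i,j\}\in E$, $r\in[k]$; $Y^{rl}_{ii}=0$ for $i\in[n]$, $r\ne l$; $Y\ge0$; $\begin{bmatrix}1&\mathrm{diag}(Y)^{\top}\\ \mathrm{diag}(Y)&Y\end{bmatrix}\succeq0$; together with the additional inequalities $1-\sum_{r\in[k]}Y^{rr}_{ii}-\sum_{r\in[k]}Y^{rr}_{jj}+\sum_{r,l\in[k]}Y^{rl}_{ij}\ge0$ for all $i,j\in[n]$, $i>j$, and $Y^{ll}_{ii}-\sum_{r\in[k]}Y^{rl}_{ij}\ge0$ for all $i\ne j$ in $[n]$ and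 $l\in[k]$. Then (P1) and (P2) are equivalent: every feasible solution of one yields a feasible solution of the other with the same objective value; in particular their optimal values coincide.
   Context: $\mathbb S^m$ is the space of real symmetric $m\times m$ matrices; $\mathrm{diag}(Y)$ is the vector of diagonal entries; $Y\ge0$ is entrywise nonnegativity; $\succeq0$ is positive semidefiniteness. *)

(* Defs.v *)
From HB Require Import structures.
From mathcomp Require Import all_boot all_order all_algebra.
From mathcomp Require Import reals.
Set Implicit Arguments. Unset Strict Implicit. Unset Printing Implicit Defensive.
Import Order.TTheory GRing.Theory Num.Theory.
Local Open Scope ring_scope.

Section Defs.
Variable R : realType.

Definition psd (m : nat) (M : 'M[R]_m) : Prop :=
  M^T = M /\ forall x : 'cV[R]_m, 0 <= (x^T *m M *m x) 0 0.

(* Block (r,l), entry (i,j): Y^{rl}_{ij}, with Y indexed by (block, vertex). *)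
Definition blk (k n : nat) (Y : 'M[R]_(k * n)) (r l : 'I_k) (i j : 'I_n) : R :=
  Y (mxvec_index r i) (mxvec_index l j).

Definition lifted (m : nat) (Y : 'M[R]_m) : 'M[R]_(1 + m) :=
  block_mx (1%:M : 'M[R]_1) (\row_a Y a a) (\col_a Y a a) Y.

Definition common (m : nat) (Y : 'M[R]_m) : Prop :=
  Y^T = Y /\ (forall a b, 0 <= Y a b) /\ psd (lifted Y).

(* Problem (P1): Y in S^{n(k+1)}, blocks indexed by 'I_k.+1, the first k
   blocks (r < k) are the colour classes [k]. *)
Definition P1_feasible (n k : nat) (e : rel 'I_n) (Y : 'M[R]_(k.+1 * n)) : Prop :=
  [/\ forall (r : 'I_k.+1) (i j : 'I_n), (r < k)%N -> e i j -> blk Y r r i j = 0,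
      forall i : 'I_n, \sum_(r < k.+1) blk Y r r i i = 1,
      forall (r l : 'I_k.+1) (i : 'I_n), r != l -> blk Y r l i i = 0
    & common Y].

Definition P1_obj (n k : nat) (Y : 'M[R]_(k.+1 * n)) : R :=
  \sum_(r < k.+1 | (r < k)%N) \sum_(i < n) blk Y r r i i.

Definition P2_feasible (n k : nat) (e : rel 'I_n) (Y : 'M[R]_(k * n)) : Prop :=
  [/\ forall (r : 'I_k) (i j : 'I_n), e i j -> blk Y r r i j = 0,
      forall (r l : 'I_k) (i : 'I_n), r != l -> blk Y r l i i = 0,
      common Y,
      forall i j : 'I_n, (j < i)%N ->
        0 <= 1 - \sum_(r < k) blk Y r r i i - \sum_(r < k) blk Y r r j j
               + \sum_(r < k) \sum_(l < k) blk Y r l i j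
    & forall (i j : 'I_n) (l : 'I_k), i != j ->
        0 <= blk Y l l i i - \sum_(r < k) blk Y r l i j].

Definition P2_obj (n k : nat) (Y : 'M[R]_(k * n)) : R :=
  \sum_(r < k) \sum_(i < n) blk Y r r i i.

End Defs.

(* Main.v *)
Require Import Defs.
From HB Require Import structures.
From mathcomp Require Import all_boot all_order all_algebra.
From mathcomp Require Import reals.
From mathcomp Require Import ring lra.
Import Order.TTheory GRing.Theory Num.Theory.
Local Open Scope ring_scope.

Set Implicit Arguments. Unset Strict Implicit. Unset Printing Implicit Defensive.



Section Gen.
Variable R : realType.

Lemma big_option (T : finType) (F : option T -> R) :
  \sum_(o : option T) F o = F None + \sum_(p : T) F (Some p).
Proof.
rewrite [in LHS]/index_enum !unlock /=.
congr (_ + _); rewrite /index_enum !unlock /=.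
by elim: (isFinite.enum_subdef _) => //= a l ->.
Qed.

Section BF.
Variable T : finType.
Definition BF (M : T -> T -> R) (v w : T -> R) := \sum_a \sum_b v a * M a b * w b.
Definition dlt (a : T) : T -> R := fun x => (x == a)%:R.

Lemma sum_dl (h : T -> R) b : \sum_a (a == b)%:R * h a = h b.
Proof.
rewrite (bigD1 b) //= eqxx mul1r big1 ?addr0 // => a /negbTE ->; by rewrite mul0r.
Qed.
Lemma sum_dr (h : T -> R) b : \sum_a h a * (a == b)%:R = h b.
Proof. by rewrite -[RHS](sum_dl h b); apply eq_bigr => a _; rewrite mulrC. Qed.

Lemma BF_dl M b w : BF M (dlt b) w = \sum_c M b c * w c.
Proof.
rewrite /BF (eq_bigr (fun a => (a == b)%:R * \sum_c M a c * w c)) ?sum_dl // => a _.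
by rewrite mulr_sumr; apply eq_bigr => c _; rewrite mulrA.
Qed.
Lemma BF_dr M v b : BF M v (dlt b) = \sum_a v a * M a b.
Proof.
rewrite /BF; apply eq_bigr => a _.
by rewrite (eq_bigr (fun c => (v a * M a c) * (c == b)%:R)) ?sum_dr.
Qed.
Lemma BF_dd M a b : BF M (dlt a) (dlt b) = M a b.
Proof. by rewrite BF_dl sum_dr. Qed.

Lemma BF_sym M v w : (forall a b, M a b = M b a) -> BF M v w = BF M w v.
Proof.
move=> Ms; rewrite /BF exchange_big; apply eq_bigr => a _; apply eq_bigr => b _.
by rewrite Ms; ring.
Qed.

Lemma BF_eqM M M' v w : (forall a b, M a b = M' a b) -> BF M v w = BF M' v w.
Proof. by move=> E; apply eq_bigr => a _; apply eq_bigr => b _; rewrite E. Qed.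
Lemma BF_eqv M v v' w w' : (forall a, v a = v' a) -> (forall a, w a = w' a) ->
  BF M v w = BF M v' w'.
Proof. by move=> E E'; apply eq_bigr => a _; apply eq_bigr => b _; rewrite E E'. Qed.

Lemma BF_expand M v w t :
  BF M (fun x => v x + t * w x) (fun x => v x + t * w x) =
  BF M v v + t * (BF M v w + BF M w v) + t ^+ 2 * BF M w w.
Proof.
rewrite /BF.
transitivity (\sum_a \sum_b (v a * M a b * v b + t * (v a * M a b * w b + w a * M a b * v b)
   + t ^+ 2 * (w a * M a b * w b))).
  by apply eq_bigr => a _; apply eq_bigr => b _; ring.
under eq_bigr do rewrite big_split /= big_split /= -mulr_sumr -mulr_sumr big_split /=.
by rewrite big_split big_split /= -!mulr_sumr big_split.
Qed.

Definition PSDf (M : T -> T -> R) := forall v, 0 <= BF M v v.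

Lemma psd_lin M v : PSDf M -> (forall a b, M a b = M b a) -> BF M v v = 0 ->
  forall b, \sum_a v a * M a b = 0.
Proof.
move=> Mp Ms v0 b.
set B := \sum_a v a * M a b.
have C0 : 0 <= M b b by have := Mp (dlt b); rewrite BF_dd.
have H t : 0 <= 2 * t * B + t ^+ 2 * M b b.
  have := Mp (fun x => v x + t * dlt b x).
  rewrite BF_expand v0 BF_dr BF_dd BF_dl -/B.
  have -> : \sum_c M b c * v c = B by apply eq_bigr => c _; rewrite Ms mulrC.
  by move=> h; rewrite mulr2n; lra.
pose t := - B / (M b b + 1).
have Ht : t * (M b b + 1) = - B by rewrite /t mulrVK // unitfE; lra.
have := H t. nra.
Qed.

End BF.

Lemma gram (T U : finType) M (Tm : U -> T -> R) : PSDf M ->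
  PSDf (fun a b : U => BF M (Tm a) (Tm b)).
Proof.
move=> Mp x.
suff -> : BF (fun a b => BF M (Tm a) (Tm b)) x x =
          BF M (fun c => \sum_a x a * Tm a c) (fun c => \sum_a x a * Tm a c) by [].
rewrite /BF.
transitivity (\sum_a \sum_b \sum_c \sum_d x a * Tm a c * M c d * Tm b d * x b).
  apply eq_bigr => a _; apply eq_bigr => b _.
  rewrite mulr_sumr mulr_suml; apply eq_bigr => c _.
  rewrite mulr_sumr mulr_suml; apply eq_bigr => d _; ring.
transitivity (\sum_c \sum_d \sum_a \sum_b x a * Tm a c * M c d * Tm b d * x b).
  transitivity (\sum_a \sum_c \sum_d \sum_b x a * Tm a c * M c d * Tm b d * x b).
    apply eq_bigr => a _; rewrite exchange_big; apply eq_bigr => c _.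
    by rewrite exchange_big.
  by rewrite exchange_big; apply eq_bigr => c _; rewrite exchange_big.
apply eq_bigr => c _; apply eq_bigr => d _.
rewrite mulr_suml mulr_suml; apply eq_bigr => a _.
rewrite mulr_sumr; apply eq_bigr => b _; ring.
Qed.
End Gen.

Section Gen2.
Variable R : realType.
Lemma psd_comp (T U : finType) (M : T -> T -> R) (f : U -> T) :
  PSDf M -> PSDf (fun a b => M (f a) (f b)).
Proof.
move=> Mp v; have := gram (fun a => @dlt R _ (f a)) Mp v; congr (_ <= _).
by apply: BF_eqM => a b; rewrite BF_dd.
Qed.

Lemma BF_avg (T S : finType) (Ms : S -> T -> T -> R) c v w :
  BF (fun a b => c * \sum_s Ms s a b) v w = c * \sum_s BF (Ms s) v w.
Proof.
rewrite /BF.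
transitivity (\sum_a \sum_b \sum_s c * (v a * Ms s a b * w b)).
  apply eq_bigr => a _; apply eq_bigr => b _.
  rewrite mulr_sumr mulr_sumr mulr_suml; apply eq_bigr => s _; ring.
symmetry; rewrite mulr_sumr.
transitivity (\sum_s \sum_a \sum_b c * (v a * Ms s a b * w b)).
  apply eq_bigr => s _; rewrite mulr_sumr; apply eq_bigr => a _; by rewrite mulr_sumr.
by rewrite exchange_big; apply eq_bigr => a _; rewrite exchange_big.
Qed.
End Gen2.



Section Link.
Variable R : realType.
Variables K n : nat.
Notation P := ('I_K * 'I_n)%type.

Definition gb (Y : 'M[R]_(K * n)) (p q : P) : R :=
  Y (mxvec_index p.1 p.2) (mxvec_index q.1 q.2).
Definition toP (a : 'I_(K * n)) : P := enum_val (cast_ord (esym (mxvec_cast K n)) a).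
Definition mkM (G : P -> P -> R) : 'M[R]_(K * n) := \matrix_(a, b) G (toP a) (toP b).
Definition Lift (G : P -> P -> R) (a b : option P) : R :=
  match a, b with
  | None, None => 1
  | None, Some q => G q q
  | Some p, None => G p p
  | Some p, Some q => G p q
  end.
Definition Pcommon (G : P -> P -> R) :=
  [/\ forall p q, G p q = G q p, forall p q, 0 <= G p q & PSDf (Lift G)].

Lemma toP_mx p : toP (mxvec_index p.1 p.2) = p.
Proof. by case: p => i j; rewrite /toP /mxvec_index cast_ordK enum_rankK. Qed.

Lemma mx_toP a : mxvec_index (toP a).1 (toP a).2 = a.
Proof. by case/mxvec_indexP: a => i j; have /= -> := toP_mx (i, j). Qed.

Lemma sum_mx (F : 'I_(K * n) -> R) :
  \sum_a F a = \sum_(p : P) F (mxvec_index p.1 p.2).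
Proof. by rewrite (reindex _ (curry_mxvec_bij _ _)) /=; apply eq_bigr => [[i j]] _. Qed.

Lemma gb_mkM G p q : gb (mkM G) p q = G p q.
Proof. by rewrite /gb mxE !toP_mx. Qed.

Definition vx (x : 'cV[R]_(1 + K * n)) (o : option P) : R :=
  match o with
  | None => x (lshift (K * n) ord0) 0
  | Some p => x (rshift 1 (mxvec_index p.1 p.2)) 0
  end.

Lemma qf_lifted Y x :
  (x^T *m lifted Y *m x) 0 0 = BF (Lift (gb Y)) (vx x) (vx x).
Proof.
transitivity (\sum_c \sum_d x c 0 * lifted Y c d * x d 0).
  rewrite mxE exchange_big; apply eq_bigr => d _.
  by rewrite mxE mulr_suml; apply eq_bigr => c _; rewrite mxE.
rewrite /BF big_option big_split_ord big_ord1 /=.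
congr (_ + _).
  rewrite big_option big_split_ord big_ord1 /= sum_mx.
  rewrite /lifted block_mxEul mxE eqxx mulr1n; congr (_ + _).
  by apply eq_bigr => p _; rewrite block_mxEur mxE.
rewrite sum_mx; apply eq_bigr => p _.
rewrite big_option big_split_ord big_ord1 /= sum_mx.
rewrite /lifted block_mxEdl mxE; congr (_ + _).
by apply eq_bigr => q _; rewrite block_mxEdr.
Qed.

Lemma lifted_sym (Y : 'M[R]_(K * n)) : Y^T = Y -> (lifted Y)^T = lifted Y.
Proof.
move=> Ys; rewrite /lifted tr_block_mx trmx1 Ys; congr block_mx.
  by apply/matrixP => i j; rewrite !mxE.
by apply/matrixP => i j; rewrite !mxE.
Qed.

Lemma common_P (Y : 'M[R]_(K * n)) : common Y -> Pcommon (gb Y).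
Proof.
move=> [Ys [Y0 [_ Yp]]]; split.
- by move=> p q; rewrite /gb -[in LHS]Ys mxE.
- by move=> p q; apply: Y0.
move=> v.
pose x : 'cV[R]_(1 + K * n) :=
  \col_c (match split c with inl _ => v None | inr a => v (Some (toP a)) end).
have := Yp x; rewrite qf_lifted; congr (_ <= _).
apply BF_eqv => [[p|]|[p|]]; rewrite /vx /x mxE ?(unsplitK (inl _)) ?(unsplitK (inr _)) ?toP_mx //.
Qed.

Lemma P_common G : Pcommon G -> common (mkM G).
Proof.
move=> [Gs G0 Gp].
have Ms : (mkM G)^T = mkM G by apply/matrixP => a b; rewrite !mxE Gs.
split; first exact: Ms.
split; first by move=> a b; rewrite mxE.
split; first exact: lifted_sym.
move=> x; rewrite qf_lifted.
have := Gp (vx x); congr (_ <= _).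
by apply: BF_eqM => [[p|] [q|]] //=; rewrite gb_mkM.
Qed.

End Link.

Lemma PSDf_eq (R : realType) (T : finType) (M M' : T -> T -> R) :
  (forall a b, M a b = M' a b) -> PSDf M -> PSDf M'.
Proof. by move=> E Mp v; rewrite -(BF_eqM _ _ E). Qed.

Lemma Pcommon_comp (R : realType) K n K' n' (G : 'I_K * 'I_n -> 'I_K * 'I_n -> R)
  (f : 'I_K' * 'I_n' -> 'I_K * 'I_n) :
  Pcommon G -> Pcommon (fun p q => G (f p) (f q)).
Proof.
move=> [Gs G0 Gp]; split => //.
apply: PSDf_eq (psd_comp (omap f) Gp) => [[a|] [b|]] //.
Qed.

Lemma Pcommon_avg (R : realType) K n (S : finType) (Gs : S -> 'I_K * 'I_n -> 'I_K * 'I_n -> R) :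
  (0 < #|S|)%N -> (forall s, Pcommon (Gs s)) ->
  Pcommon (fun p q => #|S|%:R^-1 * \sum_s Gs s p q).
Proof.
move=> S0 HG; split.
- by move=> p q; congr (_ * _); apply eq_bigr => s _; case: (HG s) => ->.
- move=> p q; apply mulr_ge0; first by rewrite invr_ge0 ler0n.
  by apply sumr_ge0 => s _; case: (HG s) => _ ->.
move=> v.
rewrite (BF_eqM _ _ (M' := fun a b => #|S|%:R^-1 * \sum_s Lift (Gs s) a b)); last first.
  move=> [a|] [b|] //=.
  by rewrite sumr_const -mulr_natr mul1r mulVf // pnatr_eq0 -lt0n.
rewrite BF_avg; apply mulr_ge0; first by rewrite invr_ge0 ler0n.
by apply sumr_ge0 => s _; case: (HG s) => _ _ ->.
Qed.



Section Vi.
Variable R : realType.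
Variables K n : nat.
Notation P := ('I_K * 'I_n)%type.

Definition vi (i : 'I_n) (o : option P) : R :=
  match o with None => 1 | Some p => - (p.2 == i)%:R end.

Lemma sum_pair (F : P -> R) : \sum_p F p = \sum_r \sum_j F (r, j).
Proof. by rewrite pair_big; apply eq_bigr => [[]]. Qed.

Lemma sum_vi (F : P -> R) i : \sum_(p : P) (p.2 == i)%:R * F p = \sum_r F (r, i).
Proof. by rewrite sum_pair; apply eq_bigr => r _; rewrite sum_dl. Qed.

Lemma BF_vivi (G : P -> P -> R) i j : BF (Lift G) (vi i) (vi j) =
  1 - \sum_r G (r, i) (r, i) - \sum_r G (r, j) (r, j) + \sum_r \sum_l G (r, i) (l, j).
Proof.
rewrite /BF big_option big_option /= mul1r mulr1.
rewrite (eq_bigr (fun p : P => - ((p.2 == j)%:R * G p p))); last first.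
  by move=> p _; rewrite mul1r mulrN mulrC.
rewrite sumrN sum_vi.
rewrite (eq_bigr (fun p : P => - ((p.2 == i)%:R * (G p p - \sum_(q : P) (q.2 == j)%:R * G p q)))); last first.
  move=> p _; rewrite big_option /= mulr1.
  have -> : \sum_q (- (p.2 == i)%:R) * G p q * (- (q.2 == j)%:R) =
     (p.2 == i)%:R * \sum_q (q.2 == j)%:R * G p q.
    by rewrite mulr_sumr; apply eq_bigr => q _; ring.
  ring.
rewrite sumrN (sum_vi (fun p => G p p - \sum_q (q.2 == j)%:R * G p q)).
have E : \sum_r (G (r, i) (r, i) - \sum_q (q.2 == j)%:R * G (r, i) q) =
   \sum_r G (r, i) (r, i) - \sum_r \sum_l G (r, i) (l, j).
  by rewrite sumrB; congr (_ - _); apply eq_bigr => r _; rewrite (sum_vi (G (r, i))).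
rewrite E; ring.
Qed.

Lemma BF_dvi (G : P -> P -> R) p j :
  BF (Lift G) (@dlt R _ (Some p)) (vi j) = G p p - \sum_l G p (l, j).
Proof.
rewrite BF_dl big_option /= mulr1.
rewrite (eq_bigr (fun q : P => - ((q.2 == j)%:R * G p q))); last first.
  by move=> q _; rewrite mulrN mulrC.
by rewrite sumrN sum_vi.
Qed.

Lemma BF_vid (G : P -> P -> R) i q :
  BF (Lift G) (vi i) (@dlt R _ (Some q)) = G q q - \sum_r G (r, i) q.
Proof.
rewrite BF_dr big_option /= mul1r.
rewrite (eq_bigr (fun p : P => - ((p.2 == i)%:R * G p q))); last first.
  by move=> p _; rewrite mulNr.
by rewrite sumrN sum_vi.
Qed.
Lemma BF_dNvi (G : P -> P -> R) j :
  BF (Lift G) (@dlt R _ None) (vi j) = 1 - \sum_r G (r, j) (r, j).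
Proof.
rewrite BF_dl big_option /= mulr1.
rewrite (eq_bigr (fun q : P => - ((q.2 == j)%:R * G q q))); last first.
  by move=> q _; rewrite mulrN mulrC.
by rewrite sumrN (sum_vi (fun q => G q q)).
Qed.
End Vi.

Section Shift.
Variable R : realType.
Variable k' : nat.
Notation k := k'.+1.
Notation c := ((k%:R)^-1 : R).

Lemma shift_sum (h : 'I_k -> R) s : \sum_r h (r + s) = \sum_r h r.
Proof. by rewrite [RHS](reindex_inj (addIr s)). Qed.
Lemma shift_sum' (h : 'I_k -> R) l : \sum_s h (l + s) = \sum_r h r.
Proof. by rewrite [RHS](reindex_inj (addrI l)). Qed.

Lemma avg_const (x : R) : \sum_(r : 'I_k) c * x = x.
Proof.
rewrite sumr_const (_ : #|_| = k) ?card_ord // -(mulr_natl (k%:R^-1 * x) k) mulrA mulfV ?mul1r //.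
by rewrite pnatr_eq0.
Qed.

Lemma A1 (h : 'I_k -> R) : \sum_r (c * \sum_s h (r + s)) = \sum_r h r.
Proof. by under eq_bigr do rewrite shift_sum'; rewrite avg_const. Qed.

Lemma A2 (h : 'I_k -> 'I_k -> R) :
  \sum_r \sum_l c * \sum_s h (r + s) (l + s) = \sum_r \sum_l h r l.
Proof.
rewrite -[RHS](A1 (fun r => \sum_l h r l)); apply eq_bigr => r _.
rewrite -mulr_sumr exchange_big; congr (_ * _); apply eq_bigr => s _.
by rewrite (shift_sum (fun l => h (r + s) l)).
Qed.

Lemma A3 (h : 'I_k -> 'I_k -> R) l :
  \sum_r c * \sum_s h (r + s) (l + s) = c * \sum_l' \sum_r h r l'.
Proof.
rewrite -mulr_sumr exchange_big; congr (_ * _).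
rewrite -(shift_sum' (fun l' => \sum_r h r l') l); apply eq_bigr => s _.
by rewrite (shift_sum (fun r => h r (l + s))).
Qed.

Lemma A4 (h : 'I_k -> 'I_k -> R) r :
  \sum_l c * \sum_s h (r + s) (l + s) = c * \sum_r' \sum_l h r' l.
Proof.
rewrite -mulr_sumr exchange_big; congr (_ * _).
rewrite -(shift_sum' (fun r' => \sum_l h r' l) r); apply eq_bigr => s _.
by rewrite (shift_sum (fun l => h (r + s) l)).
Qed.

Lemma avg1 (h : 'I_k -> R) l : c * \sum_s h (l + s) = c * \sum_r h r.
Proof. by rewrite shift_sum'. Qed.
End Shift.



Section Of.
Variable R : realType.
Variables (n : nat) (e : rel 'I_n).

Lemma toP_mx' K (r : 'I_K) (i : 'I_n) : toP (mxvec_index r i) = (r, i).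
Proof. exact: (toP_mx (r, i)). Qed.

Lemma blk_mkM K (Z : 'I_K * 'I_n -> 'I_K * 'I_n -> R) r l i j :
  blk (mkM Z) r l i j = Z (r, i) (l, j).
Proof. by rewrite /blk mxE !toP_mx'. Qed.

Lemma P2_of k (Z : 'I_k * 'I_n -> 'I_k * 'I_n -> R) :
  Pcommon Z ->
  (forall r i j, e i j -> Z (r, i) (r, j) = 0) ->
  (forall r l i, r != l -> Z (r, i) (l, i) = 0) ->
  (forall i j : 'I_n, (j < i)%N -> 0 <= 1 - \sum_r Z (r, i) (r, i) - \sum_r Z (r, j) (r, j)
        + \sum_r \sum_l Z (r, i) (l, j)) ->
  (forall i j l, i != j -> 0 <= Z (l, i) (l, i) - \sum_r Z (r, i) (l, j)) ->
  P2_feasible e (mkM Z).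
Proof.
move=> PZ H1 H2 H3 H4; split.
- by move=> r i j eij; rewrite blk_mkM H1.
- by move=> r l i rl; rewrite blk_mkM H2.
- exact: P_common.
- move=> i j ji.
  have E1 i' : \sum_r blk (mkM Z) r r i' i' = \sum_r Z (r, i') (r, i').
    by apply eq_bigr => r _; rewrite blk_mkM.
  have E2 : \sum_r \sum_l blk (mkM Z) r l i j = \sum_r \sum_l Z (r, i) (l, j).
    by apply eq_bigr => r _; apply eq_bigr => l _; rewrite blk_mkM.
  by rewrite !E1 E2; apply: H3.
- move=> i j l ij; rewrite blk_mkM.
  have -> : \sum_r blk (mkM Z) r l i j = \sum_r Z (r, i) (l, j).
    by apply eq_bigr => r _; rewrite blk_mkM.
  exact: H4.
Qed.

Lemma P2_obj_mkM k (Z : 'I_k * 'I_n -> 'I_k * 'I_n -> R) :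
  P2_obj (mkM Z) = \sum_r \sum_i Z (r, i) (r, i).
Proof. by apply eq_bigr => r _; apply eq_bigr => i _; rewrite blk_mkM. Qed.

Lemma P1_of k (Z : 'I_k.+1 * 'I_n -> 'I_k.+1 * 'I_n -> R) :
  Pcommon Z ->
  (forall (r : 'I_k.+1) i j, (r < k)%N -> e i j -> Z (r, i) (r, j) = 0) ->
  (forall i, \sum_r Z (r, i) (r, i) = 1) ->
  (forall r l i, r != l -> Z (r, i) (l, i) = 0) ->
  P1_feasible e (mkM Z).
Proof.
move=> PZ H1 H2 H3; split.
- by move=> r i j rk eij; rewrite blk_mkM H1.
- move=> i; rewrite -(H2 i); apply eq_bigr => r _; by rewrite blk_mkM.
- by move=> r l i rl; rewrite blk_mkM H3.
- exact: P_common.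
Qed.

Lemma P1_obj_mkM k (Z : 'I_k.+1 * 'I_n -> 'I_k.+1 * 'I_n -> R) :
  P1_obj (mkM Z) = \sum_(r < k.+1 | (r < k)%N) \sum_i Z (r, i) (r, i).
Proof. by apply eq_bigr => r _; apply eq_bigr => i _; rewrite blk_mkM. Qed.

End Of.



Section Dir1.
Variable R : realType.
Variables (n k' : nat) (e : rel 'I_n).
Notation k := k'.+1.
Notation wd := (widen_ord (leqnSn k)).
Notation o := (@ord_max k).

Lemma sum_filter (F : 'I_k.+1 -> R) :
  \sum_(r < k.+1 | (r < k)%N) F r = \sum_(r < k) F (wd r).
Proof.
rewrite big_mkcond big_ord_recr /= ltnn addr0; apply eq_bigr => r _.
by rewrite ltn_ord.
Qed.

Lemma Lift_sym K (G : 'I_K * 'I_n -> 'I_K * 'I_n -> R) :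
  (forall p q, G p q = G q p) -> forall a b, Lift G a b = Lift G b a.
Proof. by move=> Gs [a|] [b|] //=. Qed.

Lemma dir1 (Y1 : 'M[R]_(k.+1 * n)) : P1_feasible e Y1 ->
  exists Y2 : 'M[R]_(k * n), P2_feasible e Y2 /\ P2_obj Y2 = P1_obj Y1.
Proof.
case=> Hedge Hdiag Hoff Hc.
have PC := common_P Hc.
set G1 := gb Y1 in PC.
have [G1s G10 G1p] := PC.
have KI i q : \sum_r G1 (r, i) q = G1 q q.
  have H0 : BF (Lift G1) (@vi R _ _ i) (@vi R _ _ i) = 0.
    rewrite BF_vivi.
    have Hd : \sum_r G1 (r, i) (r, i) = 1 := Hdiag i.
    have Ho : \sum_r \sum_l G1 (r, i) (l, i) = \sum_r G1 (r, i) (r, i).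
      apply eq_bigr => r _; rewrite (bigD1 r) //= big1 ?addr0 // => l lr.
      by apply: Hoff; rewrite eq_sym.
    rewrite Ho Hd; ring.
  have := psd_lin G1p (Lift_sym G1s) H0 (Some q).
  by rewrite -BF_dr BF_vid => /eqP; rewrite subr_eq0 => /eqP.
have KI' i q : \sum_(r < k) G1 (wd r, i) q + G1 (o, i) q = G1 q q.
  by rewrite -(KI i q) [RHS]big_ord_recr.
have Hd' i : \sum_(r < k) G1 (wd r, i) (wd r, i) + G1 (o, i) (o, i) = 1.
  by rewrite -(Hdiag i) [RHS]big_ord_recr.
have HD i j : \sum_(l < k) \sum_(r < k) G1 (wd r, i) (wd l, j) =
    \sum_(l < k) G1 (wd l, j) (wd l, j) - G1 (o, i) (o, i) + G1 (o, j) (o, i).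
  have -> : \sum_(l < k) \sum_(r < k) G1 (wd r, i) (wd l, j) =
     \sum_(l < k) (G1 (wd l, j) (wd l, j) - G1 (o, i) (wd l, j)).
    by apply eq_bigr => l _; rewrite -(KI' i (wd l, j)) addrK.
  rewrite sumrB.
  have -> : \sum_(l < k) G1 (o, i) (wd l, j) = G1 (o, i) (o, i) - G1 (o, j) (o, i).
    rewrite -(KI' j (o, i)) addrK; apply eq_bigr => l _; exact: G1s.
  ring.
pose G' := fun p q : 'I_k * 'I_n => G1 (wd p.1, p.2) (wd q.1, q.2).
pose Z := fun p q : 'I_k * 'I_n =>
  k%:R^-1 * \sum_(s : 'I_k) G' (p.1 + s, p.2) (q.1 + s, q.2).
have PZ : Pcommon Z.
  have := @Pcommon_avg R k n 'I_k (fun s p q => G' (p.1 + s, p.2) (q.1 + s, q.2)).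
  rewrite card_ord; apply => // s.
  apply: (Pcommon_comp (fun p : 'I_k * 'I_n => (p.1 + s, p.2))).
  exact: (Pcommon_comp (fun p : 'I_k * 'I_n => (wd p.1, p.2))).
exists (mkM Z); split; last first.
  rewrite P2_obj_mkM /P1_obj sum_filter exchange_big [RHS]exchange_big /=.
  apply eq_bigr => i _; rewrite /Z.
  exact: (A1 (fun r => G' (r, i) (r, i))).
apply: P2_of => //.
- move=> r i j eij; rewrite /Z big1 ?mulr0 // => s _.
  by apply: Hedge => //; exact: (ltn_ord (r + s)%R).
- move=> r l i rl; rewrite /Z big1 ?mulr0 // => s _.
  apply: Hoff; apply/eqP => E; move/eqP: rl; apply.
  apply: (addIr s); apply: val_inj; exact: (congr1 val E).
- move=> i j ji.
  have -> : \sum_r Z (r, i) (r, i) = \sum_(r < k) G1 (wd r, i) (wd r, i).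
    exact: (A1 (fun r => G' (r, i) (r, i))).
  have -> : \sum_r Z (r, j) (r, j) = \sum_(r < k) G1 (wd r, j) (wd r, j).
    exact: (A1 (fun r => G' (r, j) (r, j))).
  have -> : \sum_r \sum_l Z (r, i) (l, j) = \sum_(r < k) \sum_(l < k) G1 (wd r, i) (wd l, j).
    exact: (A2 (fun r l => G' (r, i) (l, j))).
  rewrite exchange_big HD.
  have := Hd' i; have := G10 (o, j) (o, i); lra.
- move=> i j l ij.
  have -> : Z (l, i) (l, i) = k%:R^-1 * \sum_(r < k) G1 (wd r, i) (wd r, i).
    exact: (avg1 (fun r => G' (r, i) (r, i))).
  have -> : \sum_r Z (r, i) (l, j) =
      k%:R^-1 * \sum_(l' < k) \sum_(r < k) G1 (wd r, i) (wd l', j).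
    exact: (A3 (fun r l => G' (r, i) (l, j))).
  rewrite HD -mulrBr; apply: mulr_ge0; first by rewrite invr_ge0 ler0n.
  have := Hd' i; have := Hd' j; have := KI' i (o, j); rewrite (G1s (o, i) (o, j)).
  have : 0 <= \sum_(r < k) G1 (wd r, i) (o, j) by apply: sumr_ge0 => r _.
  lra.
Qed.
End Dir1.



Section Dir2.
Variable R : realType.
Variables (n k' : nat) (e : rel 'I_n).
Notation k := k'.+1.
Notation wd := (widen_ord (leqnSn k)).
Notation o := (@ord_max k).

Lemma ord_case (r : 'I_k.+1) : (exists r', r = wd r') \/ r = o.
Proof.
case: (ltnP r k) => h.
  by left; exists (inord r); apply: val_inj; rewrite /= inordK.
by right; apply: val_inj => /=; apply/eqP; rewrite eqn_leq h andbT -ltnS ltn_ord.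
Qed.

Lemma dir2 (Y2 : 'M[R]_(k * n)) : P2_feasible e Y2 ->
  exists Y1 : 'M[R]_(k.+1 * n), P1_feasible e Y1 /\ P1_obj Y1 = P2_obj Y2.
Proof.
case=> Hedge Hoff Hc H1 H2.
have PC := common_P Hc.
set G2 := gb Y2 in PC.
pose Z := fun p q : 'I_k * 'I_n =>
  k%:R^-1 * \sum_(s : 'I_k) G2 (p.1 + s, p.2) (q.1 + s, q.2).
have PZ : Pcommon Z.
  have := @Pcommon_avg R k n 'I_k (fun s p q => G2 (p.1 + s, p.2) (q.1 + s, q.2)).
  rewrite card_ord; apply => // s.
  exact: (Pcommon_comp (fun p : 'I_k * 'I_n => (p.1 + s, p.2))).
have [Zs Z0 Zp] := PZ.
have Zedge r i j : e i j -> Z (r, i) (r, j) = 0.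
  by move=> eij; rewrite /Z big1 ?mulr0 // => s _; apply: Hedge.
have Zoff r l i : r != l -> Z (r, i) (l, i) = 0.
  move=> rl; rewrite /Z big1 ?mulr0 // => s _.
  apply: Hoff; apply/eqP => E; move/eqP: rl; apply; exact: (addIr s).
have Zrow r i : \sum_l Z (r, i) (l, i) = Z (r, i) (r, i).
  rewrite (bigD1 r) //= big1 ?addr0 // => l lr.
  by apply: Zoff; rewrite eq_sym.
have Zc i : \sum_r Z (r, i) (r, i) = \sum_r G2 (r, i) (r, i).
  exact: (A1 (fun r => G2 (r, i) (r, i))).
have Zd i j : \sum_r \sum_l Z (r, i) (l, j) = \sum_r \sum_l G2 (r, i) (l, j).
  exact: (A2 (fun r l => G2 (r, i) (l, j))).
pose T := fun a : option ('I_k.+1 * 'I_n) =>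
  match a with
  | None => @dlt R _ None
  | Some p => if (p.1 < k)%N then @dlt R _ (Some (inord p.1, p.2)) else @vi R k n p.2
  end.
pose G1 := fun p q => BF (Lift Z) (T (Some p)) (T (Some q)).
have Tw r i : T (Some (wd r, i)) = @dlt R _ (Some (r, i)).
  by rewrite /T /= ltn_ord inord_val.
have To i : T (Some (o, i)) = @vi R k n i.
  by rewrite /T /= ltnn.
have Gww r i l j : G1 (wd r, i) (wd l, j) = Z (r, i) (l, j).
  by rewrite /G1 !Tw BF_dd.
have Gwo r i j : G1 (wd r, i) (o, j) = Z (r, i) (r, i) - \sum_l Z (r, i) (l, j).
  by rewrite /G1 Tw To BF_dvi.
have Goo i j : G1 (o, i) (o, j) = BF (Lift Z) (@vi R k n i) (@vi R k n j).
  by rewrite /G1 !To.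
have G1s p q : G1 p q = G1 q p by rewrite /G1 BF_sym //; exact: Lift_sym.
have Gwo0 r i j : 0 <= G1 (wd r, i) (o, j).
  rewrite Gwo; have [->|ij] := eqVneq i j; first by rewrite Zrow subrr.
  have -> : Z (r, i) (r, i) = k%:R^-1 * \sum_r G2 (r, i) (r, i).
    exact: (avg1 (fun r => G2 (r, i) (r, i))).
  have -> : \sum_l Z (r, i) (l, j) = k%:R^-1 * \sum_r0 \sum_l G2 (r0, i) (l, j).
    exact: (A4 (fun r l => G2 (r, i) (l, j))).
  rewrite -mulrBr; apply: mulr_ge0; first by rewrite invr_ge0 ler0n.
  have : 0 <= \sum_l (G2 (l, i) (l, i) - \sum_r G2 (r, i) (l, j)).
    by apply: sumr_ge0 => l _; exact: (H2 i j l ij).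
  by rewrite sumrB [X in _ - X]exchange_big.
have TN : T None = @dlt R _ None by [].
have PG1 : Pcommon G1.
  split; first exact: G1s.
  - move=> [r i] [l j].
    have [[r' ->]|->] := ord_case r; have [[l' ->]|->] := ord_case l.
    + by rewrite Gww.
    + exact: Gwo0.
    + by rewrite G1s.
    + rewrite Goo; have [->|ij] := eqVneq i j; first exact: Zp.
      rewrite BF_vivi Zc Zc Zd.
      case: (ltnP j i) => ji; first exact: (H1 i j ji).
      have ji' : (i < j)%N.
        by rewrite ltn_neqAle ji andbT; apply: contra_neq ij => E; apply: val_inj.
      have := H1 j i ji'.
      have -> : \sum_r \sum_l G2 (r, j) (l, i) = \sum_r \sum_l G2 (r, i) (l, j).
        rewrite exchange_big; apply eq_bigr => r0 _; apply eq_bigr => l0 _.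
        by case: PC => + _ _; apply.
      lra.
  - clearbody T.
  have HS p : BF (Lift Z) (T (Some p)) (T None) = G1 p p.
    move: p => [r i]; have [[r' ->]|->] := ord_case r.
      by rewrite Tw TN BF_dd /= Gww.
    rewrite To TN BF_sym; last exact: Lift_sym.
    rewrite BF_dNvi Goo BF_vivi.
    have -> : \sum_r \sum_l Z (r, i) (l, i) = \sum_r Z (r, i) (r, i).
      by apply eq_bigr => r0 _; rewrite Zrow.
    ring.
  apply: PSDf_eq (gram T Zp) => [[p|] [q|]] /=; last by rewrite TN BF_dd.
  + by [].
  + exact: HS.
  + by rewrite BF_sym ?HS //; exact: Lift_sym.
exists (mkM G1); split.
  apply: P1_of => //.
  - move=> r i j rk eij.
    have [[r' E]|E] := ord_case r; first by rewrite E Gww Zedge.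
    by move: rk; rewrite E /= ltnn.
  - move=> i; rewrite big_ord_recr /=.
    rewrite Goo BF_vivi.
    have -> : \sum_r \sum_l Z (r, i) (l, i) = \sum_r Z (r, i) (r, i).
      by apply eq_bigr => r0 _; rewrite Zrow.
    have -> : \sum_(r < k) G1 (wd r, i) (wd r, i) = \sum_r Z (r, i) (r, i).
      by apply eq_bigr => r _; rewrite Gww.
    ring.
  - have Hwo r i : G1 (wd r, i) (o, i) = 0 by rewrite Gwo Zrow subrr.
    move=> r l i rl.
    have [[r' Er]|Er] := ord_case r; have [[l' El]|El] := ord_case l; subst r l.
    + rewrite Gww Zoff //; apply: contra_neq rl => ->; by [].
    + exact: Hwo.
    + by rewrite G1s Hwo.
    + by rewrite eqxx in rl.
rewrite /P1_obj sum_filter /P2_obj.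
have -> : \sum_(r < k) \sum_i blk (mkM G1) (wd r) (wd r) i i = \sum_r \sum_i Z (r, i) (r, i).
  by apply eq_bigr => r _; apply eq_bigr => i _; rewrite blk_mkM Gww.
rewrite exchange_big [RHS]exchange_big; apply eq_bigr => i _; exact: Zc.
Qed.
End Dir2.


Unset Implicit Arguments. Set Strict Implicit.

Theorem theorem2 (R : realType) (n k : nat) (e : rel 'I_n)
    (e_sym : symmetric e) (e_irr : irreflexive e) (hk : (1 <= k)%N) :
  (forall Y1 : 'M[R]_(k.+1 * n), P1_feasible e Y1 ->
     exists Y2 : 'M[R]_(k * n), P2_feasible e Y2 /\ P2_obj Y2 = P1_obj Y1)
  /\
  (forall Y2 : 'M[R]_(k * n), P2_feasible e Y2 ->
     exists Y1 : 'M[R]_(k.+1 * n), P1_feasible e Y1 /\ P1_obj Y1 = P2_obj Y2).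
Proof.
case: k hk => [//|k'] _; split.
- by move=> Y1 /dir1.
- by move=> Y2 /dir2.
Qed.
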